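(* Let $\mathbb K=\mathbb U(2)\oplus\mathbb U(2)$, $\mathbf v=(1,0,0,0)\in\mathbb K$, let $\gamma\in A_{\mathbb K}\setminus\{0\}$ be odd, let $d_1\in\mathbb K^\vee$ with $\bar d_1=\gamma$, let $d_2\in\mathbb E_8(2)^\vee$ with $q_{\mathbb E_8(2)}(\bar d_2)=q_{\mathbb K}(\gamma)$ (so $\bar d_2\ne0$), and put $\Lambda_\gamma=\mathbb Z(d_1,d_2)+\mathbb K\oplus\mathbb E_8(2)$. Regard $\mathbf v$ as a primitive isotropic vector of $\Lambda_\gamma$. (1) If $\gamma\equiv(\frac12,\frac12,\frac12,0),(\frac12,\frac12,0,0),(\frac12,\frac12,0,\frac12),(0,\frac12,\frac12,\frac12)\bmod\mathbb K$, then $\mathbf v$ has level $1$ in $\Lambda_\gamma$. (2) If $\gamma\equiv(0,0,\frac12,\frac12),(\frac12,0,\frac12,\frac12)\bmod\mathbb K$, then $\mathbf v$ has level $2$ in $\Lambda_\gamma$.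
   Context: $\mathbb U(2)$ is the lattice $\mathbb Z^2$ with Gram matrix $\binom{0\,2}{2\,0}$; vectors of $\mathbb K\otimes\mathbb Q$ are written as $(a,b,c,e)$ in the basis given by the two standard bases, so $\mathbb K^\vee=(\frac12\mathbb Z)^4$. $\mathbb E_8$ is the negative-definite $E_8$ lattice and $\mathbb E_8(2)$ has form doubled. $A_L=L^\vee/L$ with discriminant quadratic form $q_L$ (valued in $\mathbb Z/2$ here); $\gamma$ is odd if $q_{\mathbb K}(\gamma)=1$. The level of a primitive isotropic $\mathbf v\in L$ is the positive integer $\ell$ with $\langle\mathbf v,L\rangle=\ell\mathbb Z$. *)

(* Defs.v *)
(* Lattices are modelled inside Q-vector spaces of row vectors. *)
From mathcomp Require Import all_boot all_order all_algebra.
Set Implicit Arguments. Unset Strict Implicit. Unset Printing Implicit Defensive.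
Import Order.TTheory GRing.Theory Num.Theory.
Local Open Scope ring_scope.

Definition is_int (r : rat) : Prop := exists z : int, r = z%:~R.
Definition intvec n (x : 'rV[rat]_n) : Prop := forall i, is_int (x 0 i).

Definition bform n (G : 'M[rat]_n) (x y : 'rV[rat]_n) : rat := (x *m G *m y^T) 0 0.

(* Gram matrix of K = U(2) (+) U(2), basis (a,b,c,e) *)
Definition gramK : 'M[rat]_4 :=
  \matrix_(i, j) (if ((i : nat), (j : nat)) \in [:: (0,1); (1,0); (2,3); (3,2)]%N
                  then 2 else 0).

(* E8 Dynkin diagram (Bourbaki numbering 1..8, here 0..7): chain 1-3-4-5-6-7-8, 2-4 *)
Definition e8_edge (i j : nat) : bool :=
  ((i, j) \in [:: (0,2); (2,3); (3,4); (4,5); (5,6); (6,7); (1,3)]%N) ||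
  ((j, i) \in [:: (0,2); (2,3); (3,4); (4,5); (5,6); (6,7); (1,3)]%N).

(* Gram matrix of the negative definite E8 lattice (= - Cartan matrix) *)
Definition gramE8 : 'M[rat]_8 :=
  \matrix_(i, j) (if i == j then -2 else if e8_edge i j then 1 else 0).
Definition gramE8_2 : 'M[rat]_8 := 2 *: gramE8.

Definition bK := bform gramK.
Definition bE := bform gramE8_2.

Definition dualK (x : 'rV[rat]_4) : Prop := forall y, intvec y -> is_int (bK x y).
Definition dualE (x : 'rV[rat]_8) : Prop := forall y, intvec y -> is_int (bE x y).

Definition eqmod2 (r s : rat) : Prop := exists z : int, r - s = (2 * z)%:~R.

(* ambient space K (x) Q  (+)  E8(2) (x) Q *)
Definition V := ('rV[rat]_4 * 'rV[rat]_8)%type.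
Definition bL (x y : V) : rat := bK x.1 y.1 + bE x.2 y.2.
Definition scv (k : int) (x : V) : V := (k%:~R *: x.1, k%:~R *: x.2).

(* Lambda_gamma = Z (d1,d2) + K (+) E8(2) *)
Definition Lambda (d1 : 'rV[rat]_4) (d2 : 'rV[rat]_8) (x : V) : Prop :=
  exists n : int, intvec (x.1 - n%:~R *: d1) /\ intvec (x.2 - n%:~R *: d2).

Definition isotropic (v : V) : Prop := bL v v = 0.
Definition primitive (L : V -> Prop) (v : V) : Prop :=
  L v /\ forall (x : V) (k : int), L x -> v = scv k x -> k = 1 \/ k = -1.

Definition has_level (L : V -> Prop) (v : V) (l : nat) : Prop :=
  isotropic v /\ primitive L v /\ (0 < l)%N /\
  forall r : rat, (exists x, L x /\ bL v x = r) <-> (exists k : int, r = ((l%:Z) * k)%:~R).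

Definition vecK (a b c e : rat) : 'rV[rat]_4 := \row_(i < 4) [:: a; b; c; e]`_i.
Definition vv : V := (vecK 1 0 0 0, 0).

(* the class of d1 in A_K = K^vee / K is that of the given vector *)
Definition in_class (d1 c : 'rV[rat]_4) : Prop := intvec (d1 - c).

(* Main.v *)
Require Import Defs.
From mathcomp Require Import all_boot all_order all_algebra ring lra zify.
Import Order.TTheory GRing.Theory Num.Theory.
Local Open Scope ring_scope.
Notation i0 := (@Ordinal 4 0 isT).
Notation i1 := (@Ordinal 4 1 isT).
Notation i2 := (@Ordinal 4 2 isT).
Notation i3 := (@Ordinal 4 3 isT).
Lemma bK_expand x y : bK x y = 2 * (x 0 i0 * y 0 i1 + x 0 i1 * y 0 i0 + x 0 i2 * y 0 i3 + x 0 i3 * y 0 i2).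
Proof.
rewrite /bK /bform !mxE !big_ord_recr big_ord0 /=.
rewrite !mxE !big_ord_recr !big_ord0 /= !mxE /=.
have E0 : widen_ord (leqnSn 3) (widen_ord (leqnSn 2) (widen_ord (leqnSn 1) ord_max)) = i0 by apply: val_inj.
have E1 : widen_ord (leqnSn 3) (widen_ord (leqnSn 2) ord_max) = i1 by apply: val_inj.
have E2 : widen_ord (leqnSn 3) ord_max = i2 by apply: val_inj.
have E3 : ord_max = i3 by apply: val_inj.
rewrite E0 E1 E2 E3.
move: (x 0 i0) (x 0 i1) (x 0 i2) (x 0 i3) (y 0 i0) (y 0 i1) (y 0 i2) (y 0 i3) => a b c d e f g h. ring.
Qed.

Lemma bE0 y : bE 0 y = 0.
Proof. by rewrite /bE /bform !mul0mx mxE. Qed.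

Lemma is_intD a b : is_int a -> is_int b -> is_int (a+b).
Proof. by move=> [x->] [y->]; exists (x+y); rewrite intrD. Qed.
Lemma is_intN a : is_int a -> is_int (-a).
Proof. by move=> [x->]; exists (-x); rewrite mulrNz. Qed.
Lemma is_intM a b : is_int a -> is_int b -> is_int (a*b).
Proof. by move=> [x->] [y->]; exists (x*y); rewrite intrM. Qed.
Lemma is_intz (z : int) : is_int (z%:~R).
Proof. by exists z. Qed.
Lemma is_int0 : is_int 0.
Proof. by exists 0. Qed.
Lemma is_int1 : is_int 1.
Proof. by exists 1. Qed.
Lemma is_int_eq r s : r = s -> is_int r -> is_int s.
Proof. by move->. Qed.

Lemma intvec_vecK {a b c e} : is_int a -> is_int b -> is_int c -> is_int e -> intvec (vecK a b c e).
Proof.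
move=> ha hb hc he i; rewrite mxE; case: i => [[|[|[|[|m]]]] Hm] //=.
Qed.

Lemma bLvv x : bL vv x = 2 * x.1 0 i1.
Proof. rewrite /bL bE0 bK_expand /vv /= !mxE /=. ring. Qed.

Lemma dual2 {d} : dualK d -> is_int (2 * d 0 i0) /\ is_int (2 * d 0 i2).
Proof.
move=> hd; split.
  have := hd (vecK 0 1 0 0) (intvec_vecK is_int0 is_int1 is_int0 is_int0).
  apply: is_int_eq; rewrite bK_expand !mxE /=; ring.
have := hd (vecK 0 0 0 1) (intvec_vecK is_int0 is_int0 is_int0 is_int1).
apply: is_int_eq; rewrite bK_expand !mxE /=; ring.
Qed.

Lemma unit_int (k j : int) : k * j = 1 -> k = 1 \/ k = -1.
Proof.
move=> H.
have := intUnitRing.unitzPl (n:=j) (m:=k). rewrite mulrC H => /(_ erefl).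
rewrite qualifE => /orP [/eqP|/eqP]; by [left|right].
Qed.

Lemma prim {d1} d2 : dualK d1 -> eqmod2 (bK d1 d1) 1 -> primitive (Lambda d1 d2) vv.
Proof.
move=> hd [t Ht]; split.
  exists 0; rewrite /vv /= mulr0z !scale0r !subr0; split.
    exact: intvec_vecK is_int1 is_int0 is_int0 is_int0.
  by move=> i; rewrite mxE; exact: is_int0.
move=> x k [n [H1 H2]] [Hv _].
have Ha : 1 = k%:~R * x.1 0 i0 by have := congr1 (fun M : 'rV_4 => M 0 i0) Hv; rewrite !mxE.
have Hb : 0 = k%:~R * x.1 0 i1 by have := congr1 (fun M : 'rV_4 => M 0 i1) Hv; rewrite !mxE.
have He : 0 = k%:~R * x.1 0 i3 by have := congr1 (fun M : 'rV_4 => M 0 i3) Hv; rewrite !mxE.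
have k0 : (k%:~R : rat) != 0.
  apply/eqP => k0; move: Ha; rewrite k0 mul0r => /eqP; by rewrite oner_eq0.
have xb : x.1 0 i1 = 0.
  by move/esym/eqP: Hb; rewrite mulf_eq0 (negbTE k0) => /eqP.
have xe : x.1 0 i3 = 0.
  by move/esym/eqP: He; rewrite mulf_eq0 (negbTE k0) => /eqP.
have [wb Hwb] := H1 i1. have [we Hwe] := H1 i3. have [u Hu] := H1 i0.
rewrite !mxE xb sub0r in Hwb. rewrite !mxE xe sub0r in Hwe. rewrite !mxE in Hu.
have [[pa Hpa] [pc Hpc]] := dual2 hd.
rewrite bK_expand in Ht.
have Hn : n * (2 * t + 1) = -2 * (pa * wb + pc * we).
  apply: (@intr_inj rat).
  rewrite !(intrM, intrD) -Hpa -Hpc -Hwb -Hwe.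
  have -> : (t%:~R : rat) = ((2 * t)%:~R) / 2 by rewrite intrM; field.
  by rewrite -Ht; field.
have [m Hm] : exists m, n = 2 * m.
  exists (-(pa * wb + pc * we) - n * t). lia.
apply: (@unit_int k (u + m * pa)).
apply: (@intr_inj rat).
rewrite !(intrM, intrD) -Hpa -Hu Hm intrM [RHS]rmorph1 [RHS]Ha. ring.
Qed.

Lemma level_gen {d1} d2 c (l : nat) : dualK d1 -> eqmod2 (bK d1 d1) 1 -> in_class d1 c ->
  ((l = 1)%N /\ c 0 i1 = 1/2 \/ (l = 2)%N /\ c 0 i1 = 0) -> has_level (Lambda d1 d2) vv l.
Proof.
move=> hd hodd hc hl.
have [y Hy] := hc i1. rewrite !mxE in Hy.
split; first by rewrite /isotropic bLvv /vv /= !mxE /=; ring.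
split; first exact: prim.
split; first by case: hl => [[->]|[->]].
move=> r; split.
  move=> [x [[n [H1 H2]] <-]]; rewrite bLvv.
  have [z Hz] := H1 i1; rewrite !mxE in Hz.
  have Ex : x.1 0 i1 = z%:~R + n%:~R * (y%:~R + c 0 i1) by rewrite -Hy -Hz; ring.
  case: hl => [[-> Hc]|[-> Hc]]; rewrite Ex Hc.
    exists (2 * z + n + 2 * n * y); rewrite !(intrM, intrD). by field.
  exists (z + n * y); rewrite !(intrM, intrD). ring.
move=> [k ->].
case: hl => [[-> Hc]|[-> Hc]].
  exists (k%:~R *: c, k%:~R *: d2); split.
    exists k; split => i /=; rewrite !mxE.
      have [w Hw] := hc i; rewrite !mxE in Hw.
      apply: (@is_int_eq (- (k%:~R * w%:~R))); first by rewrite -Hw; ring.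
      by apply: is_intN; apply: is_intM; apply: is_intz.
    rewrite subrr; exact: is_int0.
  rewrite bLvv /= mxE Hc !(intrM, intrD). by field.
exists (k%:~R *: vecK 0 1 0 0, 0); split.
  exists 0; rewrite /= mulr0z !scale0r !subr0; split => i.
    rewrite !mxE; case: i => [[|[|[|[|m]]]] Hm] //=; rewrite ?mulr0 ?mulr1;
    by [exact: is_int0 | exact: is_intz].
  rewrite mxE; exact: is_int0.
rewrite bLvv /= !mxE /= !(intrM, intrD). ring.
Qed.

Theorem lemma6p3 (d1 : 'rV[rat]_4) (d2 : 'rV[rat]_8)
  (hd1 : dualK d1)
  (hgam0 : ~ intvec d1)
  (hodd : eqmod2 (bK d1 d1) 1)
  (hd2 : dualE d2)
  (hq : eqmod2 (bE d2 d2) (bK d1 d1)) :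
  ((in_class d1 (vecK (1/2) (1/2) (1/2) 0) \/ in_class d1 (vecK (1/2) (1/2) 0 0) \/
    in_class d1 (vecK (1/2) (1/2) 0 (1/2)) \/ in_class d1 (vecK 0 (1/2) (1/2) (1/2))) ->
   has_level (Lambda d1 d2) vv 1)
  /\
  ((in_class d1 (vecK 0 0 (1/2) (1/2)) \/ in_class d1 (vecK (1/2) 0 (1/2) (1/2))) ->
   has_level (Lambda d1 d2) vv 2).
Proof.
split.
  move=> [h|[h|[h|h]]]; (apply: (level_gen d2 _ 1 hd1 hodd h); left; split; [by [] | by rewrite mxE]).
move=> [h|h]; (apply: (level_gen d2 _ 2 hd1 hodd h); right; split; [by [] | by rewrite mxE]).
Qed.
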